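(* Suppose the reals $e^1_{j,n},e^2_{j,n},v_{j,n}$ ($0\le j\le J$, $1\le n\le N$) and $d^1_{j,n},d^2_{j,n}$ ($0\le j\le J$, $1\le n\le N-1$) satisfy constraints (ii) and (iii) of the context. Let $\bar e^1_n,\bar e^2_n,\bar v_n$ be the linear interpolations on $[0,x_J]$ of $(e^1_{j,n})_j,(e^2_{j,n})_j,(v_{j,n})_j$, and $\tilde d^1_n,\tilde d^2_n$ the mixed interpolations of $(d^1_{j,n})_j,(d^2_{j,n})_j$. Then for all $1\le n\le N-1$ and all $0\le x,y\le x_J$, \[ \bar e^1_n(x)+\bar e^2_{n+1}(y)+(y-x)\tilde d^1_n(x)\ge0, \] \[ \bar e^1_n(x)+\bar e^2_{n+1}(y)+(y-x)\tilde d^2_n(x)-\bar v_n(x)+\bar v_{n+1}(y)\ge0. \]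
   Context: Let $0=x_0<x_1<\dots<x_J$ and $N\ge1$. Constraints: (ii) $e^1_{j,n}+e^2_{k,n+1}+(x_k-x_j)d^1_{j,n}\ge0$ and (iii) $e^1_{j,n}+e^2_{k,n+1}+(x_k-x_j)d^2_{j,n}-v_{j,n}+v_{k,n+1}\ge0$ for all $0\le j,k\le J$, $1\le n\le N-1$. Linear interpolation of $(h_j)_{0\le j\le J}$: $\bar h(x)=\frac{x_{j+1}-x}{x_{j+1}-x_j}h_j+\frac{x-x_j}{x_{j+1}-x_j}h_{j+1}$ for $x_j\le x\le x_{j+1}$, $0\le j<J$. Mixed interpolation: for $\delta\in\{1,2\}$ and $1\le n\le N-1$ let $u^1_{j,n}=\frac{e^1_{j+1,n}-e^1_{j,n}}{x_{j+1}-x_j}$ and $u^2_{j,n}=\frac{(e^1_{j+1,n}-v_{j+1,n})-(e^1_{j,n}-v_{j,n})}{x_{j+1}-x_j}$. Define $\tilde d^\delta_n(x_j)=d^\delta_{j,n}$ and, for $x\in(x_j,x_{j+1})$: $\tilde d^\delta_n(x)=d^\delta_{j,n}$ if $d^\delta_{j,n}\le u^\delta_{j,n}$; $\tilde d^\delta_n(x)=d^\delta_{j+1,n}$ if $d^\delta_{j,n}>u^\delta_{j,n}$ and $d^\delta_{j+1,n}\ge u^\delta_{j,n}$; $\tilde d^\delta_n(x)=u^\delta_{j,n}$ if $d^\delta_{j+1,n}<u^\delta_{j,n}<d^\delta_{j,n}$. *)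

(* Defs.v *)
From mathcomp Require Import all_boot all_order all_algebra.
Set Implicit Arguments. Unset Strict Implicit. Unset Printing Implicit Defensive.
Import Order.TTheory GRing.Theory Num.Theory.
Local Open Scope ring_scope.

Section Interp.
Variable R : realFieldType.

Fixpoint seg_aux (xs : nat -> R) (x : R) (j : nat) : nat :=
  match j with
  | 0 => 0%N
  | j'.+1 => if xs j <= x then j else seg_aux xs x j'
  end.

(* Index j < J of the grid cell [x_j, x_{j+1}] containing x (for 0 <= x <= x_J). *)
Definition seg (J : nat) (xs : nat -> R) (x : R) : nat := seg_aux xs x J.-1.

Definition lin_interp (J : nat) (xs : nat -> R) (h : nat -> R) (x : R) : R :=
  let j := seg J xs x in
  if x == xs j then h j
  else if x == xs j.+1 then h j.+1
  else (xs j.+1 - x) / (xs j.+1 - xs j) * h j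
       + (x - xs j) / (xs j.+1 - xs j) * h j.+1.

(* Mixed interpolation of (d_j)_j with cell slopes u j (u j = u^delta_{j,n}). *)
Definition mixed_interp (J : nat) (xs : nat -> R) (d u : nat -> R) (x : R) : R :=
  let j := seg J xs x in
  if x == xs j then d j
  else if x == xs j.+1 then d j.+1
  else if d j <= u j then d j
  else if (d j > u j) && (d j.+1 >= u j) then d j.+1
  else u j (* remaining case: d j.+1 < u j < d j *).

Definition u1 (xs : nat -> R) (e1 : nat -> nat -> R) (n j : nat) : R :=
  (e1 j.+1 n - e1 j n) / (xs j.+1 - xs j).

Definition u2 (xs : nat -> R) (e1 v : nat -> nat -> R) (n j : nat) : R :=
  ((e1 j.+1 n - v j.+1 n) - (e1 j n - v j n)) / (xs j.+1 - xs j).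

End Interp.

(* Main.v *)
Require Import Defs.
From mathcomp Require Import all_boot all_order all_algebra.
From mathcomp Require Import ring lra zify.
Import Order.TTheory GRing.Theory Num.Theory.
Local Open Scope ring_scope.

Section H.
Variable R : realFieldType.

Lemma key_x (p q x Ej Ej1 c xk dj dj1 D : R) :
  p < q -> p <= x -> x <= q ->
  0 <= Ej + c + (xk - p) * dj -> 0 <= Ej1 + c + (xk - q) * dj1 ->
  xk <= p \/ q <= xk ->
  (D = dj /\ dj <= (Ej1 - Ej) / (q - p)) \/
  (D = dj1 /\ (Ej1 - Ej) / (q - p) <= dj1) \/
  (D = (Ej1 - Ej) / (q - p) /\ dj1 <= D /\ D <= dj) ->
  0 <= (q - x) / (q - p) * Ej + (x - p) / (q - p) * Ej1 + c + (xk - x) * D.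
Proof.
move=> pq px xq H0 H1 Hk HD.
have hp : 0 < q - p by rewrite subr_gt0.
have hn : q - p != 0 by rewrite gt_eqF.
set h := q - p in hp hn HD *.
set u := (Ej1 - Ej) / h in HD *.
have Eu : Ej1 = Ej + u * h by rewrite /u divfK //; ring.
set b := (x - p) / h.
have Hx : x = p + b * h by rewrite /b divfK //; ring.
have Ha : (q - x) / h = 1 - b.
  by rewrite /b /h; field.
have b0 : 0 <= b by rewrite /b divr_ge0 // ?subr_ge0 // ltW.
have b1 : b <= 1.
  by rewrite /b ler_pdivrMr // mul1r /h lerD2r.
have Hq : q = p + h by rewrite /h; ring.
rewrite Ha.
clearbody u b h.
subst x Ej1 q.
case: HD => [[-> Hd]|[[-> Hd]|[-> [Hd1 Hd2]]]].
- have H : 0 <= (b*h)*(u-dj) by rewrite mulr_ge0 ?mulr_ge0 ?subr_ge0 // ltW.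
  lra.
- have b1' : 0 <= 1 - b by rewrite subr_ge0.
  have H : 0 <= ((1-b)*h)*(dj1-u) by rewrite mulr_ge0 ?mulr_ge0 ?subr_ge0 // ltW.
  lra.
- case: Hk => Hk.
  + have H : 0 <= (p - xk)*(dj-u) by rewrite mulr_ge0 ?subr_ge0.
    lra.
  + have H : 0 <= (xk - (p + h))*(u-dj1) by rewrite mulr_ge0 ?subr_ge0.
    lra.
Qed.

Lemma key_y (p q y a Fj Fj1 x M : R) :
  p < q -> p <= y -> y <= q ->
  0 <= a + Fj + (p - x) * M -> 0 <= a + Fj1 + (q - x) * M ->
  0 <= a + ((q - y) / (q - p) * Fj + (y - p) / (q - p) * Fj1) + (y - x) * M.
Proof.
move=> pq py yq H0 H1.
have hp : 0 < q - p by rewrite subr_gt0.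
have hn : q - p != 0 by rewrite gt_eqF.
set h := q - p in hp hn *.
set b := (y - p) / h.
have Hx : y = p + b * h by rewrite /b divfK //; ring.
have Ha : (q - y) / h = 1 - b by rewrite /b /h; field.
have b0 : 0 <= b by rewrite /b divr_ge0 // ?subr_ge0 // ltW.
have b1 : b <= 1 by rewrite /b ler_pdivrMr // mul1r /h lerD2r.
have Hq : q = p + h by rewrite /h; ring.
rewrite Ha.
clearbody b h.
subst y q.
have b1' : 0 <= 1 - b by rewrite subr_ge0.
have := mulr_ge0 b0 H1. have := mulr_ge0 b1' H0. move=> A B. lra.
Qed.

Lemma seg_aux_spec (xs : nat -> R) x m :
  xs 0%N <= x ->
  [/\ (seg_aux xs x m <= m)%N, xs (seg_aux xs x m) <= x &
      forall i, (seg_aux xs x m < i)%N -> (i <= m)%N -> x < xs i].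
Proof.
move=> H0; elim: m => [|m [IH1 IH2 IH3]] /=.
  by split=> // i; case: i.
case: ifP => Hm.
  split=> // i H1 H2; exfalso; move: H1 H2; lia.
split; first by apply: leq_trans IH1 _.
  by [].
move=> i H1 H2; case: (ltngtP i m.+1) H2 => // [Hi|->] _.
  by apply: IH3.
by rewrite ltNge Hm.
Qed.

Lemma seg_spec J (xs : nat -> R) x :
  xs 0%N = 0 -> (0 < J)%N -> 0 <= x -> x <= xs J ->
  [/\ (seg J xs x < J)%N, xs (seg J xs x) <= x & x <= xs (seg J xs x).+1].
Proof.
move=> x0 J0 Hx HJ; rewrite /seg.
have x0' : xs 0%N <= x by rewrite x0.
have [H1 H2 H3] := @seg_aux_spec xs x J.-1 x0'.
split=> //; first by move: H1; lia.
have [E|E] := boolP (seg_aux xs x J.-1 < J.-1)%N.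
  by apply: ltW; apply: H3.
have -> : (seg_aux xs x J.-1).+1 = J by move: H1 E J0; lia.
by [].
Qed.

Lemma seg0 (xs : nat -> R) x : seg 0 xs x = 0%N.
Proof. by []. Qed.

Lemma lin_interpB J xs (h1 h2 : nat -> R) x :
  lin_interp J xs (fun j => h1 j - h2 j) x = lin_interp J xs h1 x - lin_interp J xs h2 x.
Proof. rewrite /lin_interp; case: ifP => _ //; case: ifP => _ //; ring. Qed.

Lemma lin_interpD J xs (h1 h2 : nat -> R) x :
  lin_interp J xs (fun j => h1 j + h2 j) x = lin_interp J xs h1 x + lin_interp J xs h2 x.
Proof. rewrite /lin_interp; case: ifP => _ //; case: ifP => _ //; ring. Qed.

Lemma xlem J (xs : nat -> R) (E D u : nat -> R) c xk x :
  xs 0%N = 0 -> (forall j, (j < J)%N -> xs j < xs j.+1) ->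
  (forall j, u j = (E j.+1 - E j) / (xs j.+1 - xs j)) ->
  (forall j, (j <= J)%N -> 0 <= E j + c + (xk - xs j) * D j) ->
  (forall j, (j < J)%N -> xk <= xs j \/ xs j.+1 <= xk) ->
  0 <= x -> x <= xs J ->
  0 <= lin_interp J xs E x + c + (xk - x) * mixed_interp J xs D u x.
Proof.
move=> x0 Hinc Hu HE Hk Hx HJ.
case: (posnP J) => [J0|J0].
  subst J.
  have xe : x = xs 0%N by apply/le_anti; rewrite HJ x0 Hx.
  rewrite /lin_interp /mixed_interp seg0 -xe eqxx.
  by have := HE 0%N (leqnn 0); rewrite xe.
have [Hs Hl Hr] := @seg_spec J xs x x0 J0 Hx HJ.
rewrite /lin_interp /mixed_interp.
set j := seg J xs x in Hs Hl Hr *.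
case: eqP => [->|_]; first exact: HE (ltnW Hs).
case: eqP => [->|_]; first exact: HE Hs.
apply: key_x => //; [exact: Hinc| exact: HE (ltnW Hs) | exact: HE Hs | exact: Hk|].
rewrite -Hu.
case: ifP => H1; first by left.
case: ifP => /andP H2.
  by case: H2 => _ H2; right; left.
right; right; split=> //.
have H1' : u j < D j by rewrite ltNge H1.
have H3 : D j.+1 < u j.
  by rewrite ltNge; apply/negP => H; apply: H2.
by split; apply: ltW.
Qed.

Lemma ylem J (xs : nat -> R) (F : nat -> R) a M x y :
  xs 0%N = 0 -> (forall j, (j < J)%N -> xs j < xs j.+1) ->
  (forall k, (k <= J)%N -> 0 <= a + F k + (xs k - x) * M) ->
  0 <= y -> y <= xs J ->
  0 <= a + lin_interp J xs F y + (y - x) * M.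
Proof.
move=> x0 Hinc HF Hy HJ.
case: (posnP J) => [J0|J0].
  subst J.
  have ye : y = xs 0%N by apply/le_anti; rewrite HJ x0 Hy.
  rewrite /lin_interp seg0 -ye eqxx.
  by have := HF 0%N (leqnn 0); rewrite ye.
have [Hs Hl Hr] := @seg_spec J xs y x0 J0 Hy HJ.
rewrite /lin_interp.
set j := seg J xs y in Hs Hl Hr *.
case: eqP => [->|_]; first exact: HF (ltnW Hs).
case: eqP => [->|_]; first exact: HF Hs.
apply: key_y => //; [exact: Hinc| exact: HF (ltnW Hs) | exact: HF Hs].
Qed.

Lemma mono (xs : nat -> R) J :
  (forall j, (j < J)%N -> xs j < xs j.+1) ->
  forall a b, (a <= b)%N -> (b <= J)%N -> xs a <= xs b.
Proof.
move=> Hinc a b Hab; rewrite -(subnKC Hab).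
elim: (b - a)%N => [|d IH] H; first by rewrite addn0.
apply: le_trans (IH _) _; first by move: H; lia.
rewrite addnS; apply: ltW; apply: Hinc; by move: H; lia.
Qed.

End H.

Theorem mainTheorem7 (R : realFieldType) (J N : nat) (xs : nat -> R)
  (e1 e2 v d1 d2 : nat -> nat -> R) :
  xs 0%N = 0 ->
  (forall j, (j < J)%N -> xs j < xs j.+1) ->
  (1 <= N)%N ->
  (forall j k n, (j <= J)%N -> (k <= J)%N -> (1 <= n)%N -> (n <= N - 1)%N ->
     0 <= e1 j n + e2 k n.+1 + (xs k - xs j) * d1 j n) ->
  (forall j k n, (j <= J)%N -> (k <= J)%N -> (1 <= n)%N -> (n <= N - 1)%N ->
     0 <= e1 j n + e2 k n.+1 + (xs k - xs j) * d2 j n - v j n + v k n.+1) ->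
  forall n, (1 <= n)%N -> (n <= N - 1)%N ->
  forall x y, 0 <= x -> x <= xs J -> 0 <= y -> y <= xs J ->
    0 <= lin_interp J xs (fun j => e1 j n) x + lin_interp J xs (fun j => e2 j n.+1) y
         + (y - x) * mixed_interp J xs (fun j => d1 j n) (u1 xs e1 n) x
    /\
    0 <= lin_interp J xs (fun j => e1 j n) x + lin_interp J xs (fun j => e2 j n.+1) y
         + (y - x) * mixed_interp J xs (fun j => d2 j n) (u2 xs e1 v n) x
         - lin_interp J xs (fun j => v j n) x + lin_interp J xs (fun j => v j n.+1) y.
Proof.
move=> x0 Hinc _ H1 H2 n n1 nN x y Hx HxJ Hy HyJ.
have Hk : forall k, (k <= J)%N -> forall j, (j < J)%N -> xs k <= xs j \/ xs j.+1 <= xs k.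
  move=> k kJ j jJ; case: (leqP k j) => kj.
    by left; apply: mono Hinc _ _ kj (ltnW jJ).
  by right; apply: mono Hinc _ _ kj kJ.
split.
  apply: ylem => // k kJ.
  apply: xlem => // [j jJ|j jJ]; last exact: Hk.
  by have := H1 j k n jJ kJ n1 nN; rewrite -addrA (addrC (e2 k n.+1)) addrA.
have EE : forall A B C Vx Vy : R, A + B + C - Vx + Vy = (A - Vx) + (B + Vy) + C.
  by move=> *; ring.
rewrite EE -lin_interpB -lin_interpD.
apply: ylem => // k kJ.
apply: xlem => //; last exact: Hk.
move=> j jJ.
have -> : e1 j n - v j n + (e2 k n.+1 + v k n.+1) + (xs k - xs j) * d2 j n
  = e1 j n + e2 k n.+1 + (xs k - xs j) * d2 j n - v j n + v k n.+1 by ring.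
exact: H2.
Qed.
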